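(* Let $n,r\ge1$ and let $\mathbf i=(i_k)_{k\in\mathbb Z}$ be a sequence of integers with $i_{k+r}=i_k+n$ for all $k$. Let $A^{\mathbf i}=(a_{k,l})_{k,l\in\mathbb Z}$ with $a_{k,l}=\delta_{k,i_l}$. Then $d_{A^{\mathbf i}}=|\mathrm{Inv}(\mathbf i)|$, where $\mathrm{Inv}(\mathbf i)=\{(s,t)\in\mathbb Z^2\mid 1\le s\le r,\ s<t,\ i_s\ge i_t\}$.
   Context: For a matrix $A=(a_{i,j})_{i,j\in\mathbb Z}$ with entries in $\mathbb N$ satisfying $a_{i+n,j+n}=a_{i,j}$ (as is the case for $A^{\mathbf i}$), define $d_A=\sum a_{i,j}a_{k,l}$, the sum running over all $i,j,k,l\in\mathbb Z$ with $1\le i\le n$, $k\le i$ and $j<l$. *)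

(* Defs.v *)
From HB Require Import structures.
From mathcomp Require Import all_boot all_order all_algebra.
From mathcomp Require Import classical_sets cardinality reals constructive_ereal esum.
Set Implicit Arguments. Unset Strict Implicit. Unset Printing Implicit Defensive.
Import Order.TTheory GRing.Theory Num.Theory.
Local Open Scope ring_scope.
Local Open Scope classical_set_scope.

Definition Amat (iseq : int -> int) : int -> int -> nat :=
  fun k l => nat_of_bool (k == iseq l).

Definition dA_index (n : nat) : set (int * int * int * int) :=
  [set x | let '(i, j, k, l) := x in [&& (1 <= i), (i <= n%:Z), (k <= i) & (j < l)]].

Definition dA (R : realType) (n : nat) (A : int -> int -> nat) : \bar R :=
  (\esum_(x in dA_index n)
     (((A x.1.1.1 x.1.1.2 * A x.1.2 x.2)%N)%:R : R)%:E)%E.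

Definition Inv (r : nat) (iseq : int -> int) : set (int * int) :=
  [set st | [&& (1 <= st.1), (st.1 <= r%:Z), (st.1 < st.2) & (iseq st.2 <= iseq st.1)]].

(* Main.v *)
Require Import Defs.
From HB Require Import structures.
From mathcomp Require Import all_boot all_order all_algebra.
From mathcomp Require Import classical_sets cardinality reals constructive_ereal esum fsbigop.
From mathcomp Require Import zify ring lra.
Import Order.TTheory GRing.Theory Num.Theory.
Local Open Scope ring_scope.
Local Open Scope classical_set_scope.

Lemma shiftN (iseq : int -> int) (n r : nat) :
  (forall k : int, iseq (k + r%:Z) = iseq k + n%:Z) ->
  forall (m : nat) k, iseq (k + m%:Z * r%:Z) = iseq k + m%:Z * n%:Z.
Proof.
move=> H; elim=> [|m IH] k; first by rewrite !mul0r !addr0.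
have -> : k + m.+1%:Z * r%:Z = (k + m%:Z * r%:Z) + r%:Z by nia.
rewrite H IH; nia.
Qed.

Lemma shiftZ (iseq : int -> int) (n r : nat) :
  (forall k : int, iseq (k + r%:Z) = iseq k + n%:Z) ->
  forall (m : int) k, iseq (k + m * r%:Z) = iseq k + m * n%:Z.
Proof.
move=> H [p|p] k; first exact: shiftN.
have := @shiftN iseq n r H p.+1 (k + Negz p * r%:Z).
have -> : k + Negz p * r%:Z + p.+1%:Z * r%:Z = k by rewrite NegzE; nia.
rewrite NegzE; lia.
Qed.

Lemma divpos (d x : int) : 0 < d -> 1 <= x - ((x - 1) %/ d)%Z * d <= d.
Proof.
move=> d0; have := divz_eq (x - 1) d.
have := modz_ge0 (x - 1) (lt0r_neq0 d0).
have := ltz_pmod (x - 1) d0.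
set q := ((x - 1) %/ d)%Z; set m := ((x - 1) %% d)%Z; lia.
Qed.

Lemma uniqm (x m m' d : int) : 0 < d -> 1 <= x + m * d <= d -> 1 <= x + m' * d <= d -> m = m'.
Proof. move=> *; nia. Qed.
Lemma boundI (iseq : int -> int) (N : nat) :
  exists B : int, 0 <= B /\ forall j : int, 0 <= j <= N%:Z -> - B <= iseq j <= B.
Proof.
elim: N => [|N [B [B0 HB]]].
  exists `|iseq 0|; split=> // j /andP[j0 j1].
  have -> : j = 0 by lia.
  by rewrite -ler_norml.
exists (B + `|iseq N.+1%:Z|); split; first by rewrite addr_ge0.
move=> j /andP[j0 j1].
have := normr_ge0 (iseq N.+1%:Z).
have [jN|jN] : j <= N%:Z \/ j = N.+1%:Z by lia.
  have := HB j; rewrite j0 jN => /(_ isT); lia.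
rewrite jN; have := ler_norml (iseq N.+1%:Z) `|iseq N.+1%:Z|; rewrite lexx.
move/esym/andP; lia.
Qed.

Lemma Inv_fin (n r : nat) (iseq : int -> int) :
  (1 <= n)%N -> (1 <= r)%N ->
  (forall k : int, iseq (k + r%:Z) = iseq k + n%:Z) ->
  finite_set (Inv r iseq).
Proof.
move=> n1 r1 H.
have [B [B0 HB]] := boundI iseq r.
pose T := absz ((2 * B + 1) * r%:Z).
apply: (sub_finite_set _ (finite_image (fun p : nat * nat => (Posz p.1, Posz p.2))
   (finite_setX (finite_II T) (finite_II T)))).
move=> [s t]; rewrite /Inv /= => /andP[s1 /andP[sr /andP[st ist]]].
have r0 : 0 < r%:Z by lia.
have := divz_eq t r%:Z.
have := modz_ge0 t (lt0r_neq0 r0).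
have := ltz_pmod t r0.
set q := (t %/ r%:Z)%Z; set m := (t %% r%:Z)%Z => mr m0 tq.
clearbody q m.
have hm := HB m; have hs := HB s.
have := @shiftZ iseq n r H q m.
have -> : m + q * r%:Z = t by lia.
move=> it.
have q0 : 0 <= q by clear -tq mr m0 s1 st r0; nia.
have qB : q <= 2 * B.
  have : - B <= iseq m <= B by apply: hm; lia.
  have : - B <= iseq s <= B by apply: hs; lia.
  clear -n1 q0 it ist; nia.
have tT : t < (2 * B + 1) * r%:Z by clear -tq mr qB q0 r0; nia.
exists (absz s, absz t) => /=; last by congr pair; lia.
rewrite /T; split => /=; nia.
Qed.
Theorem lemma3p1p4 (R : realType) (n r : nat) (iseq : int -> int) :
  (1 <= n)%N -> (1 <= r)%N ->
  (forall k : int, iseq (k + r%:Z) = iseq k + n%:Z) ->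
  exists c : nat, (Inv r iseq #= `I_c)%card /\ dA R n (Amat iseq) = (c%:R : R)%:E.
Proof.
move=> n1 r1 H.
have finI := @Inv_fin n r iseq n1 r1 H.
have [c Hc] := finI.
exists c; split => //.
have n0 : 0 < n%:Z by lia.
have r0 : 0 < r%:Z by lia.
pose P := [set jl : int * int | [&& jl.1 < jl.2, 1 <= iseq jl.1, iseq jl.1 <= n%:Z
   & iseq jl.2 <= iseq jl.1]].
pose e := fun jl : int * int => (iseq jl.1, jl.1, iseq jl.2, jl.2).
pose phi := fun st : int * int =>
  (st.1 + (- ((iseq st.1 - 1) %/ n%:Z)%Z) * r%:Z,
   st.2 + (- ((iseq st.1 - 1) %/ n%:Z)%Z) * r%:Z).
have stepA : dA R n (Amat iseq) = (\esum_(x in e @` P) (1 : \bar R))%E.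
  rewrite /dA esum_mkcond [RHS]esum_mkcond; apply: eq_esum => -[[[i j] k] l] _ /=.
  rewrite /Amat.
  have [eij|nij] := eqVneq i (iseq j); last first.
    have -> : ((i, j, k, l) \in e @` P) = false.
      apply/negbTE/negP => /set_mem [[j' l'] _ /= [E1 E2 _ _]].
      by move: nij; rewrite -E1 E2 eqxx.
    by rewrite mul0n; case: ifP.
  subst i.
  have [ekl|nkl] := eqVneq k (iseq l); last first.
    have -> : ((iseq j, j, k, l) \in e @` P) = false.
      apply/negbTE/negP => /set_mem [[j' l'] _ /= [_ _ E1 E2]].
      by move: nkl; rewrite -E1 E2 eqxx.
    by rewrite muln0; case: ifP.
  subst k.
  rewrite /=.
  have -> : ((iseq j, j, iseq l, l) \in e @` P) = ((iseq j, j, iseq l, l) \in dA_index n).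
    apply/idP/idP.
      move=> /set_mem [[j' l'] /and4P[h1 h2 h3 h4] /= [_ <- _ <-]].
      apply: mem_set; rewrite /dA_index /=; apply/and4P; split => //.
    move=> /set_mem; rewrite /dA_index /= => /and4P[h1 h2 h3 h4].
    apply: mem_set; exists (j, l) => //; rewrite /P /=; apply/and4P; split => //.
  by case: ifP.
have stepB : (\esum_(x in e @` P) (1 : \bar R))%E = (\esum_(x in P) (1 : \bar R))%E.
  rewrite (esum_image P e (fun _ => 1%E)) //.
  by move=> [j l] [j' l'] _ _ /= [_ -> _ ->].
have stepC : (\esum_(x in P) (1 : \bar R))%E = (\esum_(x in Inv r iseq) (1 : \bar R))%E.
  rewrite (reindex_esum (Inv r iseq) P phi (fun _ => 1%E)) //.
  split.
  - move=> [s t]; rewrite /Inv /P /phi /= => /andP[s1 /andP[sr /andP[st ist]]].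
    have hd := divpos n%:Z (iseq s) n0.
    set q := ((iseq s - 1) %/ n%:Z)%Z in hd *.
    rewrite !(@shiftZ iseq n r H).
    clearbody q.
    apply/and4P; split; lia.
  - move=> [s t] [s' t'] /set_mem; rewrite /Inv /= => /andP[s1 /andP[sr _]].
    move=> /set_mem; rewrite /Inv /= => /andP[s1' /andP[sr' _]].
    rewrite /phi /=.
    set q := ((iseq s - 1) %/ n%:Z)%Z; set q' := ((iseq s' - 1) %/ n%:Z)%Z.
    clearbody q q' => -[E1 E2].
    have E3 : (q' - q) * r%:Z = s' - s by lia.
    have qq : q = q'.
      case: (ltgtP q q') => hq //; clear -hq E3 s1 sr s1' sr' r0; nia.
    subst q'; congr pair; lia.
  - move=> [j l]; rewrite /P /= => /and4P[jl j1 jn ilj].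
    have hd := divpos r%:Z j r0.
    set q := ((j - 1) %/ r%:Z)%Z in hd.
    have is1 := @shiftZ iseq n r H (- q) j.
    have is2 := @shiftZ iseq n r H (- q) l.
    exists (j + (- q) * r%:Z, l + (- q) * r%:Z).
      rewrite /Inv /= is1 is2; apply/and4P; split; lia.
    rewrite /phi /= is1.
    have hd2 := divpos n%:Z (iseq j + - q * n%:Z) n0.
    set q2 := ((iseq j + - q * n%:Z - 1) %/ n%:Z)%Z in hd2 *.
    have : - q2 = q.
      apply: (@uniqm (iseq j + - q * n%:Z) _ _ n%:Z n0).
        by move: hd2; lia.
      apply/andP; split; lia.
    move=> ->; congr pair; lia.
rewrite stepA stepB stepC esum_fset //.
rewrite fsbig_finite //= -(card_fset_set Hc).
rewrite (eq_bigr (fun _ => (1 : R)%:E)) // sumEFin -(natr_sum _ _ _ (fun _ => 1%N)) sum1_size.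
by [].
Qed.
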